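(* There is an absolute constant $C>0$ such that for every $m\in\mathbb{N}$ and every $\boldsymbol{\sigma}\in\{0,1\}^m$, with $N=2^{m+1}$, $$ \left|L_2(\widetilde{\mathcal{H}}_m^{\mathrm{sym}}(\boldsymbol{\sigma}))-\frac{1}{N}\sqrt{\frac{\log N}{24\log 2}}\right|\le \frac{C}{N}, $$ i.e. $L_2(\widetilde{\mathcal{H}}_m^{\mathrm{sym}}(\boldsymbol{\sigma}))=\frac{1}{N}\sqrt{\frac{\log{N}}{24\log{2}}}+\mathcal{O}\left(\frac{1}{N}\right)$, where $\log$ is the natural logarithm.
   Context: For an $N$-element point multiset $\mathcal{P}=\{\boldsymbol{x}_0,\dots,\boldsymbol{x}_{N-1}\}$ in $[0,1]^2$ and $\alpha,\beta\in(0,1]$, the local discrepancy is $\Delta(\alpha,\beta,\mathcal{P})=A([0,\alpha)\times[0,\beta),\mathcal{P})-N\alpha\beta$, where $A([0,\alpha)\times[0,\beta),\mathcal{P})$ is the number of indices $0\le n\le N-1$ with $\boldsymbol{x}_n\in[0,\alpha)\times[0,\beta)$ (points counted with multiplicity). The $L_2$ discrepancy is $L_2(\mathcal{P})=\frac1N\left(\int_0^1\int_0^1|\Delta(\alpha,\beta,\mathcal{P})|^2\,d\alpha\,d\beta\right)^{1/2}$. For $\boldsymbol{\sigma}\in\{0,1\}^m$ the shifted Hammersley point set is $$\mathcal{H}_m(\boldsymbol{\sigma})=\left\{\left(\frac{t_m}{2}+\frac{t_{m-1}}{2^2}+\dots+\frac{t_1}{2^m},\ \frac{s_1}{2}+\dots+\frac{s_m}{2^m}\right):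 t_1,\dots,t_m\in\{0,1\}\right\},$$ where $s_j=t_j\oplus\sigma_j$ ($\oplus$ is addition modulo 2); it has $2^m$ points. The set $\widetilde{\mathcal{H}}_m^{\mathrm{sym}}(\boldsymbol{\sigma})$ is the union (as a multiset of $2^{m+1}$ points, some of which may coincide) of $\mathcal{H}_m(\boldsymbol{\sigma})$ with $\{(x,1-y):(x,y)\in\mathcal{H}_m(\boldsymbol{\sigma})\}$. *)

(* Defs.v *)
From Stdlib Require Import Reals List.
From Coquelicot Require Import Coquelicot.
Import ListNotations.
Open Scope R_scope.

Definition point := (R * R)%type.

Fixpoint all_bits (m : nat) : list (list bool) :=
  match m with
  | O => [ [] ]
  | S k => map (cons false) (all_bits k) ++ map (cons true) (all_bits k)
  end.

Definition b2R (b : bool) : R := if b then 1 else 0.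

Definition bit (t : list bool) (j : nat) : bool := nth (j - 1) t false.

Definition hx (m : nat) (t : list bool) : R :=
  fold_right Rplus 0
    (map (fun j => b2R (bit t j) / 2 ^ (m + 1 - j)) (seq 1 m)).

Definition hy (m : nat) (sigma t : list bool) : R :=
  fold_right Rplus 0
    (map (fun j => b2R (xorb (bit t j) (bit sigma j)) / 2 ^ j) (seq 1 m)).

Definition hammersley (m : nat) (sigma : list bool) : list point :=
  map (fun t => (hx m t, hy m sigma t)) (all_bits m).

Definition hammersley_sym (m : nat) (sigma : list bool) : list point :=
  hammersley m sigma ++ map (fun p => (fst p, 1 - snd p)) (hammersley m sigma).

Definition count_box (P : list point) (a b : R) : nat :=
  length (filter (fun p => if Rlt_dec (fst p) a then
                             if Rlt_dec (snd p) b then true else false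
                           else false) P).

Definition local_disc (P : list point) (a b : R) : R :=
  INR (count_box P a b) - INR (length P) * a * b.

Definition L2_disc (P : list point) : R :=
  / INR (length P) *
  sqrt (RInt (fun b => RInt (fun a => (Rabs (local_disc P a b)) ^ 2) 0 1) 0 1).

(* Main.v *)
Require Import Defs.
From Stdlib Require Import Reals List Lia Lra.
From Coquelicot Require Import Coquelicot.
Import ListNotations.
Open Scope R_scope.

Fixpoint sumR (n:nat) (f:nat->R) : R :=
  match n with O => 0 | S n' => sumR n' f + f n' end.

Lemma sumR_ext n f g : (forall i, (i<n)%nat -> f i = g i) -> sumR n f = sumR n g.
Proof. induction n; intros H; simpl; auto. rewrite IHn, H; auto. Qed.

Lemma sumR_plus n f g : sumR n (fun i => f i + g i) = sumR n f + sumR n g.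
Proof. induction n; simpl; [ring|rewrite IHn; ring]. Qed.

Lemma sumR_scal n a f : sumR n (fun i => a * f i) = a * sumR n f.
Proof. induction n; simpl; [ring|rewrite IHn; ring]. Qed.

Lemma sumR_S n f : sumR (S n) f = sumR n f + f n.
Proof. reflexivity. Qed.

Lemma sumR_double n f : sumR (n+n) f = sumR n (fun i => f (2*i)%nat + f (2*i+1)%nat).
Proof.
  induction n. reflexivity.
  replace (S n + S n)%nat with (S (S (n+n))) by lia.
  change (sumR (S (S (n+n))) f) with (sumR (n+n) f + f (n+n)%nat + f (S (n+n))).
  rewrite IHn. rewrite (sumR_S n).
  replace (2*n)%nat with (n+n)%nat by lia. replace (n+n+1)%nat with (S (n+n)) by lia. ring.
Qed.

Lemma sumR_add n p f : sumR (n+p) f = sumR n f + sumR p (fun i => f (n+i)%nat).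
Proof.
  induction p; simpl. rewrite Nat.add_0_r; ring.
  replace (n + S p)%nat with (S (n+p)) by lia. simpl. rewrite IHp. ring.
Qed.

Definition sum2 (n:nat) (F:nat->nat->R) : R := sumR n (fun l => sumR n (fun k => F k l)).

Lemma sum2_ext n F G : (forall k l, (k<n)%nat -> (l<n)%nat -> F k l = G k l) -> sum2 n F = sum2 n G.
Proof. intros H; unfold sum2; apply sumR_ext; intros; apply sumR_ext; intros; auto. Qed.

Lemma sum2_plus n F G : sum2 n (fun k l => F k l + G k l) = sum2 n F + sum2 n G.
Proof. unfold sum2. rewrite <- sumR_plus. apply sumR_ext; intros. apply sumR_plus. Qed.

Lemma sum2_scal n a F : sum2 n (fun k l => a * F k l) = a * sum2 n F.
Proof. unfold sum2. rewrite <- sumR_scal. apply sumR_ext; intros. apply sumR_scal. Qed.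

Lemma sum2_split P F : sum2 (P+P) F =
  sum2 P (fun k l => F (2*k)%nat l + F (2*k+1)%nat l + F (2*k)%nat (P+l)%nat + F (2*k+1)%nat (P+l)%nat).
Proof.
  unfold sum2. rewrite sumR_add. rewrite !(sumR_ext _ (fun l => sumR (P+P) _) _ (fun i _ => sumR_double _ _)).
  rewrite <- sumR_plus. apply sumR_ext; intros. rewrite <- !sumR_plus. apply sumR_ext; intros. ring.
Qed.

Lemma sumR_const n a : sumR n (fun _ => a) = INR n * a.
Proof. induction n; [simpl; ring|]. rewrite sumR_S, IHn, S_INR; ring. Qed.

Lemma sumR_id n : sumR n INR = INR n * (INR n - 1) / 2.
Proof. induction n; [simpl; field|]. rewrite sumR_S, IHn, S_INR; field. Qed.

Lemma sumR_sq n : sumR n (fun i => INR i * INR i) = INR n * (INR n - 1) * (2*INR n - 1) / 6.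
Proof. induction n; [simpl; field|]. rewrite sumR_S, IHn, S_INR; field. Qed.

Lemma sum2_prod n p q : sum2 n (fun k l => p k * q l) = sumR n p * sumR n q.
Proof.
  unfold sum2. rewrite (sumR_ext _ _ (fun l => q l * sumR n p)).
  rewrite (sumR_ext _ (fun l => q l * sumR n p) (fun l => sumR n p * q l)) by (intros; ring).
  apply sumR_scal.
  intros. rewrite <- sumR_scal. apply sumR_ext; intros; ring.
Qed.

Definition qW n (c w : nat->nat->R) := sum2 n (fun k l => c k l * w k l).
Definition w00 (k l : nat) : R := 1.
Definition w10 (k l : nat) : R := INR k.
Definition w01 (k l : nat) : R := INR l.
Definition w11 (k l : nat) : R := INR k * INR l.
Definition qQ n (c : nat->nat->R) := sum2 n (fun k l => c k l * c k l).
Definition qU n (c f g : nat->nat->R) := sum2 n (fun k l => c k l * (f k l + g k l)).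
Definition qH n (f g : nat->nat->R) := sum2 n (fun k l => f k l * g k l).

Definition cellrel (P:nat) (c' f' g' c f g : nat->nat->R) : Prop :=
  forall k l, (k<P)%nat -> (l<P)%nat ->
   c (2*k)%nat l = c' k l - g' k l /\
   c (2*k+1)%nat l = c' k l /\
   c (2*k)%nat (P+l)%nat = c' k l + 2*INR k + 1 - f' k l /\
   c (2*k+1)%nat (P+l)%nat = c' k l + 2*INR k + 2 /\
   f (2*k)%nat l = f' k l /\
   f (2*k+1)%nat l = 0 /\
   f (2*k)%nat (P+l)%nat = 1 /\
   f (2*k+1)%nat (P+l)%nat = f' k l /\
   g (2*k)%nat l = 0 /\
   g (2*k+1)%nat l = g' k l /\
   g (2*k)%nat (P+l)%nat = g' k l /\
   g (2*k+1)%nat (P+l)%nat = 1 /\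
   f' k l * f' k l = f' k l /\ g' k l * g' k l = g' k l.

Lemma INR_2k k : INR (2*k) = 2 * INR k.
Proof. rewrite mult_INR; simpl; ring. Qed.
Lemma INR_2k1 k : INR (2*k+1) = 2 * INR k + 1.
Proof. rewrite plus_INR, mult_INR; simpl; ring. Qed.

Ltac recproof :=
  let k := fresh "k" in let l := fresh "l" in let Hk := fresh in let Hl := fresh in
  match goal with H : cellrel _ _ _ _ _ _ _ |- _ =>
  unfold qW, qQ, qU, qH; rewrite sum2_split;
  rewrite <- ?sum2_scal, <- ?sum2_plus;
  apply sum2_ext; intros k l Hk Hl;
  destruct (H k l Hk Hl) as (E1&E2&E3&E4&E5&E6&E7&E8&E9&E10&E11&E12&E13&E14);
  rewrite ?E1, ?E2, ?E3, ?E4, ?E5, ?E6, ?E7, ?E8, ?E9, ?E10, ?E11, ?E12;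
  unfold w00, w10, w01, w11; rewrite ?INR_2k, ?INR_2k1, ?plus_INR;
  ring end.


Lemma rec_F00 P c' f' g' c f g : cellrel P c' f' g' c f g ->
  qW (P+P) f w00 = 2 * qW P f' w00 + sum2 P (fun k l => 1).
Proof. intros H. recproof. Qed.

Lemma rec_G00 P c' f' g' c f g : cellrel P c' f' g' c f g ->
  qW (P+P) g w00 = 2 * qW P g' w00 + sum2 P (fun k l => 1).
Proof. intros H. recproof. Qed.

Lemma rec_F10 P c' f' g' c f g : cellrel P c' f' g' c f g ->
  qW (P+P) f w10 = 4 * qW P f' w10 + qW P f' w00 + sum2 P (fun k l => 2*INR k).
Proof. intros H. recproof. Qed.

Lemma rec_G10 P c' f' g' c f g : cellrel P c' f' g' c f g ->
  qW (P+P) g w10 = 4 * qW P g' w10 + qW P g' w00 + sum2 P (fun k l => 2*INR k+1).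
Proof. intros H. recproof. Qed.

Lemma rec_F01 P c' f' g' c f g : cellrel P c' f' g' c f g ->
  qW (P+P) f w01 = 2 * qW P f' w01 + INR P * qW P f' w00 + sum2 P (fun k l => INR P + INR l).
Proof. intros H. recproof. Qed.

Lemma rec_G01 P c' f' g' c f g : cellrel P c' f' g' c f g ->
  qW (P+P) g w01 = 2 * qW P g' w01 + INR P * qW P g' w00 + sum2 P (fun k l => INR P + INR l).
Proof. intros H. recproof. Qed.

Lemma rec_F11 P c' f' g' c f g : cellrel P c' f' g' c f g ->
  qW (P+P) f w11 = 4 * qW P f' w11 + 2 * INR P * qW P f' w10 + qW P f' w01 + INR P * qW P f' w00 + sum2 P (fun k l => 2*INR k*(INR P + INR l)).
Proof. intros H. recproof. Qed.

Lemma rec_G11 P c' f' g' c f g : cellrel P c' f' g' c f g ->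
  qW (P+P) g w11 = 4 * qW P g' w11 + qW P g' w01 + 2 * INR P * qW P g' w10 + sum2 P (fun k l => (2*INR k+1)*(INR P + INR l)).
Proof. intros H. recproof. Qed.

Lemma rec_C00 P c' f' g' c f g : cellrel P c' f' g' c f g ->
  qW (P+P) c w00 = 4 * qW P c' w00 + (-1) * qW P g' w00 + (-1) * qW P f' w00 + sum2 P (fun k l => 4*INR k+3).
Proof. intros H. recproof. Qed.

Lemma rec_C10 P c' f' g' c f g : cellrel P c' f' g' c f g ->
  qW (P+P) c w10 = 8 * qW P c' w10 + 2 * qW P c' w00 + (-2) * qW P f' w10 + (-2) * qW P g' w10 + sum2 P (fun k l => (2*INR k+1)*(2*INR k) + (2*INR k+2)*(2*INR k+1)).
Proof. intros H. recproof. Qed.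

Lemma rec_C01 P c' f' g' c f g : cellrel P c' f' g' c f g ->
  qW (P+P) c w01 = 4 * qW P c' w01 + 2 * INR P * qW P c' w00 + (-1) * qW P g' w01 + (-1) * qW P f' w01 + (- INR P) * qW P f' w00 + sum2 P (fun k l => (4*INR k+3)*(INR P + INR l)).
Proof. intros H. recproof. Qed.

Lemma rec_C11 P c' f' g' c f g : cellrel P c' f' g' c f g ->
  qW (P+P) c w11 = 8 * qW P c' w11 + 2 * qW P c' w01 + 4 * INR P * qW P c' w10 + INR P * qW P c' w00 + (-2) * qW P g' w11 + (-2 * INR P) * qW P f' w10 + (-2) * qW P f' w11 + sum2 P (fun k l => ((2*INR k+1)*(2*INR k) + (2*INR k+2)*(2*INR k+1))*(INR P + INR l)).
Proof. intros H. recproof. Qed.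

Lemma rec_Q P c' f' g' c f g : cellrel P c' f' g' c f g ->
  qQ (P+P) c = 4 * qQ P c' + (-2) * qU P c' f' g' + 8 * qW P c' w10 + 6 * qW P c' w00 + sum2 P (fun k l => g' k l * g' k l) + sum2 P (fun k l => f' k l * f' k l) + (-4) * qW P f' w10 + (-2) * qW P f' w00 + sum2 P (fun k l => (2*INR k+2)*(2*INR k+2) + (2*INR k+1)*(2*INR k+1)).
Proof. intros H. recproof. Qed.

Lemma rec_U P c' f' g' c f g : cellrel P c' f' g' c f g ->
  qU (P+P) c f g = 2 * qU P c' f' g' + 2 * qW P c' w00 + (-2) * qH P f' g' + 2 * qW P g' w10 + qW P g' w00 + 2 * qW P f' w10 + qW P f' w00 + sum2 P (fun k l => 4*INR k+3).
Proof. intros H. recproof. Qed.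

Lemma rec_H P c' f' g' c f g : cellrel P c' f' g' c f g ->
  qH (P+P) f g = qW P g' w00 + qW P f' w00.
Proof. intros H. recproof. Qed.


Ltac monproof f g :=
  match goal with |- sum2 ?P _ = _ => transitivity (sum2 P (fun k l => f k * g l));
  [apply sum2_ext; intros; ring|] end;
  rewrite sum2_prod, ?sumR_const, ?sumR_id, ?sumR_sq; field.

Lemma m00 P : sum2 P (fun k l => 1) = INR P * INR P.
Proof. monproof (fun _:nat => 1) (fun _:nat => 1). Qed.
Lemma m10 P : sum2 P (fun k l => INR k) = INR P * (INR P - 1) / 2 * INR P.
Proof. monproof INR (fun _:nat => 1). Qed.
Lemma m20 P : sum2 P (fun k l => INR k * INR k) = INR P * (INR P - 1) * (2*INR P - 1) / 6 * INR P.
Proof. monproof (fun k => INR k * INR k) (fun _:nat => 1). Qed.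
Lemma m01 P : sum2 P (fun k l => INR l) = INR P * (INR P * (INR P - 1) / 2).
Proof. monproof (fun _:nat => 1) INR. Qed.
Lemma m11 P : sum2 P (fun k l => INR k * INR l) = INR P * (INR P - 1) / 2 * (INR P * (INR P - 1) / 2).
Proof. monproof INR INR. Qed.
Lemma m21 P : sum2 P (fun k l => INR k * INR k * INR l) = INR P * (INR P - 1) * (2*INR P - 1) / 6 * (INR P * (INR P - 1) / 2).
Proof. monproof (fun k => INR k * INR k) INR. Qed.

Lemma sum2_poly P A B C D E F :
  sum2 P (fun k l => A*1 + B*INR k + C*(INR k*INR k) + D*INR l + E*(INR k*INR l) + F*(INR k*INR k*INR l)) =
  A*(INR P * INR P) + B*(INR P * (INR P - 1) / 2 * INR P)
  + C*(INR P * (INR P - 1) * (2*INR P - 1) / 6 * INR P) + D*(INR P * (INR P * (INR P - 1) / 2))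
  + E*(INR P * (INR P - 1) / 2 * (INR P * (INR P - 1) / 2))
  + F*(INR P * (INR P - 1) * (2*INR P - 1) / 6 * (INR P * (INR P - 1) / 2)).
Proof.
  rewrite !sum2_plus, !sum2_scal. rewrite m00, m10, m20, m01, m11, m21. reflexivity.
Qed.

Ltac polyproof A B C D E F :=
  match goal with |- sum2 ?P _ = _ =>
  transitivity (sum2 P (fun k l => A*1 + B*INR k + C*(INR k*INR k) + D*INR l + E*(INR k*INR l) + F*(INR k*INR k*INR l)));
  [apply sum2_ext; intros; ring|] end;
  rewrite sum2_poly; field.

Definition PV (P:nat) := INR P.

Lemma p1 P : sum2 P (fun k l => 1) = INR P * INR P.
Proof. apply m00. Qed.
Lemma p2 P : sum2 P (fun k l => 2*INR k) = INR P * INR P * (INR P - 1).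
Proof. polyproof 0 2 0 0 0 0. Qed.
Lemma p3 P : sum2 P (fun k l => 2*INR k+1) = INR P * INR P * INR P.
Proof. polyproof 1 2 0 0 0 0. Qed.
Lemma p4 P : sum2 P (fun k l => INR P + INR l) = INR P * INR P * (3*INR P - 1) / 2.
Proof. polyproof (INR P) 0 0 1 0 0. Qed.
Lemma p5 P : sum2 P (fun k l => 2*INR k*(INR P + INR l)) = INR P * INR P * (INR P - 1) * (3*INR P - 1) / 2.
Proof. polyproof 0 (2*INR P) 0 0 2 0. Qed.
Lemma p6 P : sum2 P (fun k l => (2*INR k+1)*(INR P + INR l)) = INR P * INR P * INR P * (3*INR P - 1) / 2.
Proof. polyproof (INR P) (2*INR P) 0 1 2 0. Qed.
Lemma p7 P : sum2 P (fun k l => 4*INR k+3) = INR P * INR P * (2*INR P + 1).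
Proof. polyproof 3 4 0 0 0 0. Qed.
Lemma p8 P : sum2 P (fun k l => (2*INR k+1)*(2*INR k) + (2*INR k+2)*(2*INR k+1)) = 2 / 3 * INR P * INR P * (4*INR P * INR P - 1).
Proof. polyproof 2 8 8 0 0 0. Qed.
Lemma p9 P : sum2 P (fun k l => (4*INR k+3)*(INR P + INR l)) = INR P * INR P * (2*INR P + 1) * (3*INR P - 1) / 2.
Proof. polyproof (3*INR P) (4*INR P) 0 3 4 0. Qed.
Lemma p10 P : sum2 P (fun k l => ((2*INR k+1)*(2*INR k) + (2*INR k+2)*(2*INR k+1))*(INR P + INR l))
   = 1 / 3 * INR P * INR P * (4*INR P * INR P - 1) * (3*INR P - 1).
Proof. polyproof (2*INR P) (8*INR P) (8*INR P) 2 8 8. Qed.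
Lemma p11 P : sum2 P (fun k l => (2*INR k+2)*(2*INR k+2) + (2*INR k+1)*(2*INR k+1)) = INR P * INR P * (8 * INR P * INR P + 6 * INR P + 1) / 3.
Proof. polyproof 5 12 8 0 0 0. Qed.

Definition CF (n:nat) (c f g : nat->nat->R) (m o : R) : Prop :=
  let M := INR n in
  qW n c w00 = M^2/2 + M^3/2 /\
  qW n c w10 = -M^2/3 + M^4/3 /\
  qW n c w01 = -M/12 - M^2/3 + M^3/12 + M^4/3 - m*M^2/8 + o*M^2/4 /\
  qW n c w11 = M/18 + M^2/6 - 5*M^3/18 - M^4/6 + 2*M^5/9 + m*M^2/8 - o*M^2/4
               - 5*m*M^3/64 + o*M^3/8 + (m-2*o)^2*M^3/64 /\
  qW n f w00 = M/2 + M^2/2 /\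
  qW n f w10 = -M/4 + M^3/4 - m*M^2/8 + o*M^2/4 /\
  qW n f w01 = -M/3 + M^3/3 /\
  qW n f w11 = M/6 - M^2/6 - M^3/6 + M^4/6 + m*M^2/8 - o*M^2/4 - m*M^3/16 + o*M^3/8 /\
  qW n g w00 = -M/2 + M^2/2 /\
  qW n g w10 = M/4 - M^2/2 + M^3/4 + m*M^2/8 - o*M^2/4 /\
  qW n g w01 = M/6 - M^2/2 + M^3/3 /\
  qW n g w11 = -M/12 + M^2/3 - 5*M^3/12 + M^4/6 + m*M^3/16 - o*M^3/8.

Definition CFQ (n:nat) (c f g : nat->nat->R) (m o : R) : Prop :=
  let M := INR n in
  qQ n c = -M/6 + 13*M^2/72 + 2*M^3/3 + 4*M^4/9 - 13*m*M^2/48 + o*M^2/2 + (m-2*o)^2*M^2/16 /\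
  qU n c f g = -M/6 + 3*M^2/4 + 2*M^3/3 /\
  qH n f g = M^2/4.

Lemma qU_swap n c f g : qU n c f g = qU n c g f.
Proof. unfold qU. apply sum2_ext; intros; ring. Qed.
Lemma qH_swap n f g : qH n f g = qH n g f.
Proof. unfold qH. apply sum2_ext; intros; ring. Qed.

Lemma idem_f P c' f' g' c f g : cellrel P c' f' g' c f g ->
  sum2 P (fun k l => f' k l * f' k l) = qW P f' w00 /\ sum2 P (fun k l => g' k l * g' k l) = qW P g' w00.
Proof.
  intros H; split; unfold qW, w00; apply sum2_ext; intros k l Hk Hl;
  destruct (H k l Hk Hl) as (_&_&_&_&_&_&_&_&_&_&_&_&E13&E14); lra.
Qed.

Ltac polys := rewrite ?p1, ?p2, ?p3, ?p4, ?p5, ?p6, ?p7, ?p8, ?p9, ?p10, ?p11.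

Lemma step0 P c' f' g' c f g m o : cellrel P c' f' g' c f g ->
  CF P c' f' g' m o -> CF (P+P) c f g (m+1) o.
Proof.
  intros H (a1&a2&a3&a4&a5&a6&a7&a8&a9&a10&a11&a12).
  unfold CF. rewrite plus_INR.
  rewrite (rec_C00 _ _ _ _ _ _ _ H), (rec_C10 _ _ _ _ _ _ _ H), (rec_C01 _ _ _ _ _ _ _ H), (rec_C11 _ _ _ _ _ _ _ H),
    (rec_F00 _ _ _ _ _ _ _ H), (rec_F10 _ _ _ _ _ _ _ H), (rec_F01 _ _ _ _ _ _ _ H), (rec_F11 _ _ _ _ _ _ _ H),
    (rec_G00 _ _ _ _ _ _ _ H), (rec_G10 _ _ _ _ _ _ _ H), (rec_G01 _ _ _ _ _ _ _ H), (rec_G11 _ _ _ _ _ _ _ H).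
  rewrite a1,a2,a3,a4,a5,a6,a7,a8,a9,a10,a11,a12. polys.
  repeat split; field.
Qed.

Lemma step1 P c' f' g' c f g m o : cellrel P c' g' f' c g f ->
  CF P c' f' g' m o -> CF (P+P) c f g (m+1) (o+1).
Proof.
  intros H (a1&a2&a3&a4&a5&a6&a7&a8&a9&a10&a11&a12).
  unfold CF. rewrite plus_INR.
  rewrite (rec_C00 _ _ _ _ _ _ _ H), (rec_C10 _ _ _ _ _ _ _ H), (rec_C01 _ _ _ _ _ _ _ H), (rec_C11 _ _ _ _ _ _ _ H),
    (rec_F00 _ _ _ _ _ _ _ H), (rec_F10 _ _ _ _ _ _ _ H), (rec_F01 _ _ _ _ _ _ _ H), (rec_F11 _ _ _ _ _ _ _ H),
    (rec_G00 _ _ _ _ _ _ _ H), (rec_G10 _ _ _ _ _ _ _ H), (rec_G01 _ _ _ _ _ _ _ H), (rec_G11 _ _ _ _ _ _ _ H).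
  rewrite a1,a2,a3,a4,a5,a6,a7,a8,a9,a10,a11,a12. polys.
  repeat split; field.
Qed.

Lemma stepQ0 P c' f' g' c f g m o : cellrel P c' f' g' c f g ->
  CF P c' f' g' m o -> CFQ P c' f' g' m o -> CFQ (P+P) c f g (m+1) o.
Proof.
  intros H (a1&a2&a3&a4&a5&a6&a7&a8&a9&a10&a11&a12) (q1&q2&q3).
  destruct (idem_f _ _ _ _ _ _ _ H) as [i1 i2].
  unfold CFQ. rewrite plus_INR.
  rewrite (rec_Q _ _ _ _ _ _ _ H), (rec_U _ _ _ _ _ _ _ H), (rec_H _ _ _ _ _ _ _ H).
  rewrite i1, i2, q1, q2, q3, ?a1,?a2,?a3,?a4,?a5,?a6,?a7,?a8,?a9,?a10,?a11,?a12. polys.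
  repeat split; field.
Qed.

Lemma stepQ1 P c' f' g' c f g m o : cellrel P c' g' f' c g f ->
  CF P c' f' g' m o -> CFQ P c' f' g' m o -> CFQ (P+P) c f g (m+1) (o+1).
Proof.
  intros H (a1&a2&a3&a4&a5&a6&a7&a8&a9&a10&a11&a12) (q1&q2&q3).
  destruct (idem_f _ _ _ _ _ _ _ H) as [i1 i2].
  unfold CFQ. rewrite plus_INR.
  rewrite (qU_swap (P+P) c f g), (qH_swap (P+P) f g).
  rewrite (rec_Q _ _ _ _ _ _ _ H), (rec_U _ _ _ _ _ _ _ H), (rec_H _ _ _ _ _ _ _ H).
  rewrite <- (qU_swap P c' f' g'), <- (qH_swap P f' g').
  rewrite i1, i2, q1, q2, q3, ?a1,?a2,?a3,?a4,?a5,?a6,?a7,?a8,?a9,?a10,?a11,?a12. polys.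
  repeat split; field.
Qed.

Lemma stepQb0 c' f' g' c f g : cellrel 1 c' f' g' c f g ->
  CF 1 c' f' g' 0 0 -> qQ 1 c' = 1 -> qU 1 c' f' g' = 1 -> qH 1 f' g' = 0 -> CFQ (1+1) c f g 1 0.
Proof.
  intros H (a1&a2&a3&a4&a5&a6&a7&a8&a9&a10&a11&a12) q1 q2 q3.
  destruct (idem_f _ _ _ _ _ _ _ H) as [i1 i2].
  unfold CFQ. rewrite plus_INR.
  rewrite (rec_Q _ _ _ _ _ _ _ H), (rec_U _ _ _ _ _ _ _ H), (rec_H _ _ _ _ _ _ _ H).
  rewrite i1, i2, q1, q2, q3, ?a1,?a2,?a3,?a4,?a5,?a6,?a7,?a8,?a9,?a10,?a11,?a12. polys.
  simpl. repeat split; field.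
Qed.

Lemma stepQb1 c' f' g' c f g : cellrel 1 c' g' f' c g f ->
  CF 1 c' f' g' 0 0 -> qQ 1 c' = 1 -> qU 1 c' f' g' = 1 -> qH 1 f' g' = 0 -> CFQ (1+1) c f g 1 1.
Proof.
  intros H (a1&a2&a3&a4&a5&a6&a7&a8&a9&a10&a11&a12) q1 q2 q3.
  destruct (idem_f _ _ _ _ _ _ _ H) as [i1 i2].
  unfold CFQ. rewrite plus_INR.
  rewrite (qU_swap (1+1) c f g), (qH_swap (1+1) f g).
  rewrite (rec_Q _ _ _ _ _ _ _ H), (rec_U _ _ _ _ _ _ _ H), (rec_H _ _ _ _ _ _ _ H).
  rewrite <- (qU_swap 1 c' f' g'), <- (qH_swap 1 f' g').
  rewrite i1, i2, q1, q2, q3, ?a1,?a2,?a3,?a4,?a5,?a6,?a7,?a8,?a9,?a10,?a11,?a12. polys.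
  simpl. repeat split; field.
Qed.

Fixpoint Xv (t : list bool) : nat :=
  match t with [] => 0%nat | b :: t' => (Nat.b2n b + 2 * Xv t')%nat end.
Fixpoint Yv (s t : list bool) : nat :=
  match s, t with
  | s1 :: s', b :: t' => (Nat.b2n (xorb b s1) * 2 ^ length t' + Yv s' t')%nat
  | _, _ => 0%nat end.

Definition lsum (L : list (list bool)) (h : list bool -> nat) : nat :=
  fold_right (fun t acc => (h t + acc)%nat) 0%nat L.

Lemma lsum_app L1 L2 h : lsum (L1 ++ L2) h = (lsum L1 h + lsum L2 h)%nat.
Proof. induction L1; simpl; auto. rewrite IHL1; lia. Qed.
Lemma lsum_map L f h : lsum (map f L) h = lsum L (fun t => h (f t)).
Proof. induction L; simpl; auto. Qed.
Lemma lsum_plus L h1 h2 : lsum L (fun t => h1 t + h2 t)%nat = (lsum L h1 + lsum L h2)%nat.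
Proof. induction L; simpl; auto. rewrite IHL; lia. Qed.
Lemma lsum_ext L h1 h2 : (forall t, In t L -> h1 t = h2 t) -> lsum L h1 = lsum L h2.
Proof. intros H; induction L; simpl; auto. f_equal; [apply H; left; auto| apply IHL; intros; apply H; right; auto]. Qed.
Lemma lsum_le L h1 h2 : (forall t, In t L -> (h1 t <= h2 t)%nat) -> (lsum L h1 <= lsum L h2)%nat.
Proof. intros H; induction L; simpl; auto. apply Nat.add_le_mono; [apply H; left; auto| apply IHL; intros; apply H; right; auto]. Qed.

Lemma lsum_bits m h : lsum (all_bits (S m)) h = lsum (all_bits m) (fun t => h (false :: t) + h (true :: t))%nat.
Proof. simpl. rewrite lsum_app, !lsum_map, lsum_plus. reflexivity. Qed.

Lemma all_bits_len m t : In t (all_bits m) -> length t = m.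
Proof.
  revert t; induction m; simpl; intros t H.
  - destruct H as [<-|[]]; reflexivity.
  - apply in_app_or in H; destruct H as [H|H]; apply in_map_iff in H; destruct H as (u&<-&Hu); simpl; rewrite (IHm u Hu); auto.
Qed.

Lemma Xv_lt t : (Xv t < 2 ^ length t)%nat.
Proof. induction t; simpl; auto. destruct a; simpl; lia. Qed.
Lemma Yv_lt s t : (Yv s t < 2 ^ length t)%nat.
Proof.
  revert s; induction t as [|b t IH]; intros s; destruct s as [|s1 s]; simpl; try lia;
  pose proof (Nat.pow_nonzero 2 (length t) ltac:(lia)); try lia.
  specialize (IH s). destruct (xorb b s1); simpl; lia.
Qed.

Ltac bcases := repeat match goal with
  | |- context [Nat.leb ?a ?b] => destruct (Nat.leb_spec a b)
  | |- context [Nat.ltb ?a ?b] => destruct (Nat.ltb_spec a b)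
  | |- context [Nat.eqb ?a ?b] => destruct (Nat.eqb_spec a b) end; simpl; lia.

Definition xlt m k := lsum (all_bits m) (fun t => Nat.b2n (Xv t <? k)).

Lemma xlt_val m k : (k <= 2 ^ m)%nat -> xlt m k = k.
Proof.
  revert k; induction m; intros k Hk.
  - unfold xlt; simpl. destruct k; simpl; auto. simpl in Hk. assert (k = 0%nat) by lia; subst; auto.
  - unfold xlt in *. rewrite lsum_bits. simpl Xv.
    destruct (Nat.Even_or_Odd k) as [[j ->]|[j ->]]; simpl in Hk.
    + rewrite (lsum_ext _ _ (fun t => Nat.b2n (Xv t <? j) + Nat.b2n (Xv t <? j))%nat).
      rewrite lsum_plus, IHm; lia. intros; bcases.
    + rewrite (lsum_ext _ _ (fun t => Nat.b2n (Xv t <? S j) + Nat.b2n (Xv t <? j))%nat).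
      rewrite lsum_plus, !IHm; lia. intros; bcases.
Qed.

Lemma xle_val m k : (k < 2 ^ m)%nat -> lsum (all_bits m) (fun t => Nat.b2n (Xv t <=? k)) = S k.
Proof.
  intros Hk. rewrite <- (xlt_val m (S k)) by lia. unfold xlt. apply lsum_ext; intros; bcases.
Qed.

Lemma r_val m k : (k < 2 ^ m)%nat -> lsum (all_bits m) (fun t => Nat.b2n (Xv t =? k)) = 1%nat.
Proof.
  intros Hk. pose proof (xlt_val m (S k) ltac:(lia)). pose proof (xlt_val m k ltac:(lia)).
  unfold xlt in *.
  assert (E: lsum (all_bits m) (fun t => Nat.b2n (Xv t <? S k)) =
     (lsum (all_bits m) (fun t => Nat.b2n (Xv t =? k)) + lsum (all_bits m) (fun t => Nat.b2n (Xv t <? k)))%nat).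
  { rewrite <- lsum_plus. apply lsum_ext; intros; bcases. }
  lia.
Qed.

Definition hc m s k l t := (Nat.b2n (Xv t <=? k) * (Nat.b2n (Yv s t <=? l) + Nat.b2n (2^m - Yv s t <=? l)))%nat.
Definition hf (m:nat) s k l t := (Nat.b2n (Xv t =? k) * Nat.b2n (Yv s t <=? l))%nat.
Definition hg m s k l t := (Nat.b2n (Xv t =? k) * Nat.b2n (2^m - Yv s t <=? l))%nat.
Definition cN m s k l := lsum (all_bits m) (hc m s k l).
Definition fN m s k l := lsum (all_bits m) (hf m s k l).
Definition gN m s k l := lsum (all_bits m) (hg m s k l).

Lemma Xv_cons b t : Xv (b :: t) = (Nat.b2n b + 2 * Xv t)%nat.
Proof. reflexivity. Qed.

Lemma Yv_cons s1 s b t : Yv (s1 :: s) (b :: t) = (Nat.b2n (xorb b s1) * 2 ^ length t + Yv s t)%nat.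
Proof. reflexivity. Qed.

Ltac decide_cmps := repeat match goal with
 | |- context [Nat.leb ?a ?b] => first [ rewrite (proj2 (Nat.leb_le a b)) by lia | rewrite (proj2 (Nat.leb_gt a b)) by lia ]
 | |- context [Nat.ltb ?a ?b] => first [ rewrite (proj2 (Nat.ltb_lt a b)) by lia | rewrite (proj2 (Nat.ltb_ge a b)) by lia ]
 | |- context [Nat.eqb ?a ?b] => first [ rewrite (proj2 (Nat.eqb_eq a b)) by lia | rewrite (proj2 (Nat.eqb_neq a b)) by lia ]
 end; simpl; lia.

Ltac cellt m s k l :=
  apply lsum_ext; intros t Ht; pose proof (all_bits_len _ _ Ht) as Hlen;
  pose proof (Xv_lt t) as HX; pose proof (Yv_lt s t) as HY; rewrite Hlen in HX, HY;
  unfold hc, hf, hg; rewrite ?Xv_cons, ?Yv_cons, ?Hlen;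
  rewrite ?Nat.pow_succ_r' ;
  set (P := (2 ^ m)%nat) in *; set (X := Xv t) in *; set (Y := Yv s t) in *;
  destruct (Nat.lt_total X k) as [?|[?|?]]; destruct (Nat.le_gt_cases Y l); destruct (Nat.le_gt_cases (P - Y) l);
  cbn [xorb Nat.b2n]; decide_cmps.


Lemma cell_c1 m s s1 k l : (k < 2^m)%nat -> (l < 2^m)%nat ->
  (cN (S m) (s1 :: s) (2*k) l + (if s1 then fN m s k l else gN m s k l) = cN m s k l)%nat.
Proof.
  intros Hk Hl. unfold cN, fN, gN. rewrite lsum_bits.
  destruct s1; rewrite <- lsum_plus; cellt m s k l.
Qed.

Lemma lsum0 L : lsum L (fun _ => 0%nat) = 0%nat.
Proof. induction L; simpl; auto. Qed.

Lemma cell_c2 m s s1 k l : (k < 2^m)%nat -> (l < 2^m)%nat ->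
  cN (S m) (s1 :: s) (2*k+1) l = cN m s k l.
Proof.
  intros Hk Hl. unfold cN. rewrite lsum_bits. destruct s1; cellt m s k l.
Qed.

Lemma cell_c3 m s s1 k l : (k < 2^m)%nat -> (l < 2^m)%nat ->
  (cN (S m) (s1 :: s) (2*k) (2^m+l) + (if s1 then gN m s k l else fN m s k l) = cN m s k l + S k + k)%nat.
Proof.
  intros Hk Hl. pose proof (xlt_val m k ltac:(lia)) as E2. pose proof (xle_val m k Hk) as E1. unfold xlt in E2.
  unfold cN, fN, gN. rewrite lsum_bits.
  transitivity (lsum (all_bits m) (hc m s k l) + lsum (all_bits m) (fun t => Nat.b2n (Xv t <=? k))
     + lsum (all_bits m) (fun t => Nat.b2n (Xv t <? k)))%nat; [| rewrite E1, E2; lia].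
  destruct s1; rewrite <- !lsum_plus; cellt m s k l.
Qed.

Lemma cell_c4 m s s1 k l : (k < 2^m)%nat -> (l < 2^m)%nat ->
  (cN (S m) (s1 :: s) (2*k+1) (2^m+l) = cN m s k l + S k + S k)%nat.
Proof.
  intros Hk Hl. pose proof (xle_val m k Hk) as E1.
  unfold cN. rewrite lsum_bits.
  transitivity (lsum (all_bits m) (hc m s k l) + lsum (all_bits m) (fun t => Nat.b2n (Xv t <=? k))
     + lsum (all_bits m) (fun t => Nat.b2n (Xv t <=? k)))%nat; [| rewrite E1; lia].
  destruct s1; rewrite <- !lsum_plus; cellt m s k l.
Qed.

Ltac fgcase m s k l := first [
   (transitivity (lsum (all_bits m) (fun _ => 0%nat)); [cellt m s k l | apply lsum0])
 | (transitivity (lsum (all_bits m) (fun t => Nat.b2n (Xv t =? k))); [cellt m s k l | apply r_val; lia])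
 | (unfold fN, gN; cellt m s k l) ].

Lemma cell_f5 m s s1 k l : (k < 2^m)%nat -> (l < 2^m)%nat ->
  fN (S m) (s1 :: s) (2*k) l = if s1 then 0%nat else fN m s k l.
Proof. intros Hk Hl. unfold fN at 1. rewrite lsum_bits. destruct s1; fgcase m s k l. Qed.
Lemma cell_f6 m s s1 k l : (k < 2^m)%nat -> (l < 2^m)%nat ->
  fN (S m) (s1 :: s) (2*k+1) l = if s1 then fN m s k l else 0%nat.
Proof. intros Hk Hl. unfold fN at 1. rewrite lsum_bits. destruct s1; fgcase m s k l. Qed.
Lemma cell_f7 m s s1 k l : (k < 2^m)%nat -> (l < 2^m)%nat ->
  fN (S m) (s1 :: s) (2*k) (2^m+l) = if s1 then fN m s k l else 1%nat.
Proof. intros Hk Hl. unfold fN at 1. rewrite lsum_bits. destruct s1; fgcase m s k l. Qed.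
Lemma cell_f8 m s s1 k l : (k < 2^m)%nat -> (l < 2^m)%nat ->
  fN (S m) (s1 :: s) (2*k+1) (2^m+l) = if s1 then 1%nat else fN m s k l.
Proof. intros Hk Hl. unfold fN at 1. rewrite lsum_bits. destruct s1; fgcase m s k l. Qed.
Lemma cell_g9 m s s1 k l : (k < 2^m)%nat -> (l < 2^m)%nat ->
  gN (S m) (s1 :: s) (2*k) l = if s1 then gN m s k l else 0%nat.
Proof. intros Hk Hl. unfold gN at 1. rewrite lsum_bits. destruct s1; fgcase m s k l. Qed.
Lemma cell_g10 m s s1 k l : (k < 2^m)%nat -> (l < 2^m)%nat ->
  gN (S m) (s1 :: s) (2*k+1) l = if s1 then 0%nat else gN m s k l.
Proof. intros Hk Hl. unfold gN at 1. rewrite lsum_bits. destruct s1; fgcase m s k l. Qed.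
Lemma cell_g11 m s s1 k l : (k < 2^m)%nat -> (l < 2^m)%nat ->
  gN (S m) (s1 :: s) (2*k) (2^m+l) = if s1 then 1%nat else gN m s k l.
Proof. intros Hk Hl. unfold gN at 1. rewrite lsum_bits. destruct s1; fgcase m s k l. Qed.
Lemma cell_g12 m s s1 k l : (k < 2^m)%nat -> (l < 2^m)%nat ->
  gN (S m) (s1 :: s) (2*k+1) (2^m+l) = if s1 then gN m s k l else 1%nat.
Proof. intros Hk Hl. unfold gN at 1. rewrite lsum_bits. destruct s1; fgcase m s k l. Qed.

Lemma f_le1 m s k l : (k < 2^m)%nat -> (fN m s k l <= 1)%nat.
Proof.
  intros Hk. rewrite <- (r_val m k Hk). unfold fN. apply lsum_le; intros; unfold hf.
  destruct (Xv t =? k), (Yv s t <=? l); simpl; lia.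
Qed.
Lemma g_le1 m s k l : (k < 2^m)%nat -> (gN m s k l <= 1)%nat.
Proof.
  intros Hk. rewrite <- (r_val m k Hk). unfold gN. apply lsum_le; intros; unfold hg.
  destruct (Xv t =? k), (2^m - Yv s t <=? l); simpl; lia.
Qed.

Definition cR m s := fun k l => INR (cN m s k l).
Definition fR m s := fun k l => INR (fN m s k l).
Definition gR m s := fun k l => INR (gN m s k l).

Lemma idem01 n : (n <= 1)%nat -> INR n * INR n = INR n.
Proof. intros H. destruct n as [|[|n]]; simpl; try ring; lia. Qed.

Lemma cellrel_0 m s : cellrel (2^m) (cR m s) (fR m s) (gR m s)
   (cR (S m) (false::s)) (fR (S m) (false::s)) (gR (S m) (false::s)).
Proof.
  intros k l Hk Hl. unfold cR, fR, gR.
  pose proof (cell_c1 m s false k l Hk Hl) as E1. pose proof (cell_c2 m s false k l Hk Hl) as E2.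
  pose proof (cell_c3 m s false k l Hk Hl) as E3. pose proof (cell_c4 m s false k l Hk Hl) as E4.
  cbv iota beta in E1, E3.
  apply (f_equal INR) in E1, E3, E4. repeat rewrite ?plus_INR, ?S_INR in E1. repeat rewrite ?plus_INR, ?S_INR in E3.
  repeat rewrite ?plus_INR, ?S_INR in E4.
  rewrite E2, cell_f5, cell_f6, cell_f7, cell_f8, cell_g9, cell_g10, cell_g11, cell_g12 by assumption.
  cbv iota beta. rewrite ?INR_0, ?INR_1. repeat split; try lra; apply idem01; [apply f_le1|apply g_le1]; auto.
Qed.

Lemma cellrel_1 m s : cellrel (2^m) (cR m s) (gR m s) (fR m s)
   (cR (S m) (true::s)) (gR (S m) (true::s)) (fR (S m) (true::s)).
Proof.
  intros k l Hk Hl. unfold cR, fR, gR.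
  pose proof (cell_c1 m s true k l Hk Hl) as E1. pose proof (cell_c2 m s true k l Hk Hl) as E2.
  pose proof (cell_c3 m s true k l Hk Hl) as E3. pose proof (cell_c4 m s true k l Hk Hl) as E4.
  cbv iota beta in E1, E3.
  apply (f_equal INR) in E1, E3, E4. repeat rewrite ?plus_INR, ?S_INR in E1. repeat rewrite ?plus_INR, ?S_INR in E3.
  repeat rewrite ?plus_INR, ?S_INR in E4.
  rewrite E2, cell_f5, cell_f6, cell_f7, cell_f8, cell_g9, cell_g10, cell_g11, cell_g12 by assumption.
  cbv iota beta. rewrite ?INR_0, ?INR_1. repeat split; try lra; apply idem01; [apply g_le1|apply f_le1]; auto.
Qed.

Fixpoint ones (s : list bool) : nat := match s with [] => 0%nat | b :: s' => (Nat.b2n b + ones s')%nat end.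

Lemma pow2S m : (2 ^ S m = 2^m + 2^m)%nat.
Proof. simpl; lia. Qed.

Lemma base_vals : cN 0 [] 0 0 = 1%nat /\ fN 0 [] 0 0 = 1%nat /\ gN 0 [] 0 0 = 0%nat.
Proof. repeat split; reflexivity. Qed.

Lemma CF_base : CF 1 (cR 0 []) (fR 0 []) (gR 0 []) 0 0.
Proof.
  destruct base_vals as (e1&e2&e3).
  unfold CF, qW, sum2, w00, w10, w01, w11, cR, fR, gR. cbn [sumR]. rewrite e1, e2, e3. rewrite ?INR_0, ?INR_1. repeat split; field.
Qed.

Lemma CF_all s : CF (2^length s) (cR (length s) s) (fR (length s) s) (gR (length s) s) (INR (length s)) (INR (ones s)).
Proof.
  induction s as [|s1 s IH].
  - apply CF_base.
  - simpl length. rewrite pow2S, S_INR. destruct s1; simpl ones.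
    + rewrite S_INR. eapply step1; [apply cellrel_1 | exact IH].
    + eapply step0; [apply cellrel_0 | exact IH].
Qed.

Lemma CFQ_all s : (1 <= length s)%nat ->
  CFQ (2^length s) (cR (length s) s) (fR (length s) s) (gR (length s) s) (INR (length s)) (INR (ones s)).
Proof.
  induction s as [|s1 s IH]; intros Hl; simpl in Hl; [lia|].
  destruct s as [|s2 s].
  - assert (Hq : qQ 1 (cR 0 []) = 1 /\ qU 1 (cR 0 []) (fR 0 []) (gR 0 []) = 1 /\ qH 1 (fR 0 []) (gR 0 []) = 0).
    { destruct base_vals as (e1&e2&e3). unfold qQ, qU, qH, sum2, cR, fR, gR. cbn [sumR]. rewrite e1, e2, e3. rewrite ?INR_0, ?INR_1. repeat split; ring. }
    destruct Hq as (q1&q2&q3). simpl length. simpl ones. change (2^1)%nat with (1+1)%nat.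
    destruct s1; simpl Nat.b2n.
    + replace (INR 1) with 1 by reflexivity. replace (INR (1+0)) with 1 by reflexivity.
      eapply stepQb1; [apply (cellrel_1 0 []) | apply CF_base | auto..].
    + replace (INR 1) with 1 by reflexivity. replace (INR (0+0)) with 0 by reflexivity.
      eapply stepQb0; [apply (cellrel_0 0 []) | apply CF_base | auto..].
  - specialize (IH ltac:(simpl; lia)). pose proof (CF_all (s2 :: s)) as HC.
    set (s' := s2 :: s) in *. change (length (s1 :: s')) with (S (length s')).
    rewrite pow2S, S_INR. destruct s1; simpl ones.
    + rewrite S_INR. eapply stepQ1; [apply cellrel_1 | exact HC | exact IH].
    + eapply stepQ0; [apply cellrel_0 | exact HC | exact IH].
Qed.

Lemma is_RInt_quad A B C lo hi :
  is_RInt (fun x => A + B*x + C*(x*x)) lo hi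
    (A*(hi-lo) + B*(hi*hi-lo*lo)/2 + C*(hi*hi*hi-lo*lo*lo)/3).
Proof.
  replace (A*(hi-lo) + B*(hi*hi-lo*lo)/2 + C*(hi*hi*hi-lo*lo*lo)/3) with
    (minus ((fun x => A*x + B*(x*x)/2 + C*(x*x*x)/3) hi) ((fun x => A*x + B*(x*x)/2 + C*(x*x*x)/3) lo)).
  2: { unfold minus, plus, opp; simpl. field. }
  apply (is_RInt_derive (fun x => A*x + B*(x*x)/2 + C*(x*x*x)/3) (fun x => A + B*x + C*(x*x))).
  - intros x _. auto_derive; auto. field.
  - intros x _. apply (ex_derive_continuous (K := R_AbsRing) (V := R_NormedModule) (fun x => A + B*x + C*(x*x))). auto_derive. auto.
Qed.

Lemma is_RInt_sumR n (F : nat -> R -> R) (w : nat -> R) lo hi :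
  (forall k, (k < n)%nat -> is_RInt (F k) lo hi (w k)) ->
  is_RInt (fun x => sumR n (fun k => F k x)) lo hi (sumR n w).
Proof.
  induction n; intros H; simpl.
  - apply (is_RInt_ext (fun _ => zero)). intros; reflexivity.
    replace 0 with (scal (hi - lo) (@zero R_NormedModule)). apply is_RInt_const.
    unfold scal, zero; simpl. unfold mult; simpl. ring.
  - apply (is_RInt_plus (fun x => sumR n (fun k => F k x)) (F n)).
    apply IHn; intros; apply H; lia. apply H; lia.
Qed.

Lemma is_RInt_cells (f : R -> R) (n : nat) (h : R) (g : nat -> R -> R) (v : nat -> R) :
  0 < h ->
  (forall k x, (k < n)%nat -> INR k * h < x < (INR k + 1) * h -> f x = g k x) ->
  (forall k, (k < n)%nat -> is_RInt (g k) (INR k * h) ((INR k + 1) * h) (v k)) ->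
  is_RInt f 0 (INR n * h) (sumR n v).
Proof.
  intros Hh. induction n; intros Hf Hg.
  - simpl. rewrite Rmult_0_l. exact (is_RInt_point (V := R_NormedModule) f 0).
  - rewrite sumR_S, S_INR. change (sumR n v + v n) with (plus (sumR n v) (v n)).
    apply (is_RInt_Chasles (V := R_NormedModule) f 0 (INR n * h)).
    + apply IHn; intros; [apply Hf|apply Hg]; auto; lia.
    + apply (is_RInt_ext (g n)).
      * intros x Hx. assert (INR n * h <= (INR n + 1) * h) by (rewrite Rmult_plus_distr_r; lra). rewrite Rmin_left, Rmax_right in Hx by lra. symmetry; apply Hf; auto.
      * apply Hg; lia.
Qed.

Lemma fold_map_ext (f g : nat -> R) L : (forall j, In j L -> f j = g j) ->
  fold_right Rplus 0 (map f L) = fold_right Rplus 0 (map g L).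
Proof. intros H. f_equal. apply map_ext_in. auto. Qed.

Lemma fold_map_scal (f : nat -> R) a L :
  fold_right Rplus 0 (map (fun j => f j * a) L) = fold_right Rplus 0 (map f L) * a.
Proof. induction L; simpl; [ring|rewrite IHL; ring]. Qed.

Lemma seq1S m : seq 1 (S m) = 1%nat :: map S (seq 1 m).
Proof. simpl. rewrite seq_shift. reflexivity. Qed.

Lemma b2R_b2n b : b2R b = INR (Nat.b2n b).
Proof. destruct b; reflexivity. Qed.

Lemma hx_val t : hx (length t) t = INR (Xv t) / 2 ^ length t.
Proof.
  induction t as [|b t IH].
  - unfold hx. simpl. field.
  - unfold hx in *. simpl length. rewrite seq1S. simpl map. rewrite map_map. simpl fold_right.
    rewrite (fold_map_ext _ (fun j => b2R (bit t j) / 2 ^ (length t + 1 - j))).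
    + rewrite IH. rewrite Xv_cons, plus_INR, mult_INR, <- b2R_b2n. unfold bit. simpl nth.
      replace (length t + 1 - 0)%nat with (S (length t)) by lia. simpl pow. simpl INR. field.
      apply pow_nonzero; lra.
    + intros j Hj. apply in_seq in Hj. unfold bit.
      replace (S j - 1)%nat with (S (j-1)) by lia. try replace (S (length t) + 1 - S j)%nat with (length t + 1 - j)%nat by lia.
      reflexivity.
Qed.

Lemma hy_val s t : length s = length t -> hy (length t) s t = INR (Yv s t) / 2 ^ length t.
Proof.
  revert s. induction t as [|b t IH]; intros s Hs.
  - unfold hy. simpl. destruct s; simpl; field.
  - destruct s as [|s1 s]; [discriminate|]. simpl in Hs. injection Hs as Hs.
    unfold hy in *. simpl length. rewrite seq1S. simpl map. rewrite map_map. simpl fold_right.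
    rewrite (fold_map_ext _ (fun j => b2R (xorb (bit t j) (bit s j)) / 2 ^ j * / 2)).
    + rewrite fold_map_scal, IH by auto. rewrite Yv_cons, plus_INR, mult_INR, pow_INR, <- b2R_b2n. unfold bit. simpl nth.
      simpl pow. simpl INR. replace (1+1) with 2 by ring. field. apply pow_nonzero; lra.
    + intros j Hj. apply in_seq in Hj. unfold bit.
      replace (S j - 1)%nat with (S (j-1)) by lia. cbn [nth]. simpl pow. field. apply pow_nonzero; lra.
Qed.

Lemma all_bits_length m : length (all_bits m) = (2 ^ m)%nat.
Proof. induction m; simpl; auto. rewrite length_app, !length_map, IHm. lia. Qed.

Lemma sym_length m s : length (hammersley_sym m s) = (2 ^ S m)%nat.
Proof. unfold hammersley_sym, hammersley. rewrite length_app, !length_map, all_bits_length. simpl. lia. Qed.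

Lemma filter_map_len {A B} (p : B -> bool) (f : A -> B) (L : list A) :
  length (filter p (map f L)) = fold_right (fun t acc => (Nat.b2n (p (f t)) + acc)%nat) 0%nat L.
Proof. induction L; simpl; auto. destruct (p (f a)); simpl; auto. Qed.

Lemma div_lt_iff x a M : 0 < M -> (x / M < a <-> x < a * M).
Proof.
  intros HM. split; intros H.
  - apply (Rmult_lt_compat_r M) in H; auto. replace (x / M * M) with x in H by (field; lra). auto.
  - apply (Rmult_lt_compat_r (/M)) in H; [|apply Rinv_0_lt_compat; auto].
    replace (a * M * / M) with a in H by (field; lra). auto.
Qed.

Lemma cell_cmp (n k : nat) (u : R) : INR k < u < INR k + 1 -> (INR n < u <-> (n <= k)%nat).
Proof.
  intros Hu. split; intros H.
  - destruct (Nat.le_gt_cases n k) as [Hl|Hl]; auto. apply le_INR in Hl. rewrite S_INR in Hl. lra.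
  - apply le_INR in H. lra.
Qed.

Lemma rlt2 x a y b (p q : bool) : (x < a <-> p = true) -> (y < b <-> q = true) ->
  (if Rlt_dec x a then if Rlt_dec y b then true else false else false) = (p && q)%bool.
Proof.
  intros H1 H2. destruct (Rlt_dec x a) as [h1|h1]; destruct (Rlt_dec y b) as [h2|h2];
  destruct p, q; simpl; auto; try (apply H1 in h1; discriminate); try (apply H2 in h2; discriminate);
  try (exfalso; apply h1; apply H1; auto); try (exfalso; apply h2; apply H2; auto).
Qed.

Lemma cmp_iff n k u M : 0 < M -> INR k < u * M < INR k + 1 -> (INR n / M < u <-> (n <=? k)%nat = true).
Proof.
  intros HM Hu. rewrite div_lt_iff by auto. rewrite (cell_cmp n k (u*M) Hu). rewrite Nat.leb_le. tauto.
Qed.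

Lemma lsum_plus' L h1 h2 : (fold_right (fun t acc => h1 t + acc) 0 L + fold_right (fun t acc => h2 t + acc) 0 L)%nat
   = lsum L (fun t => h1 t + h2 t)%nat.
Proof. symmetry. apply lsum_plus. Qed.

Lemma INR_pow2 m : INR (2^m)%nat = 2^m.
Proof. rewrite pow_INR. reflexivity. Qed.

Lemma count_box_cell m s k l a b : length s = m ->
  INR k < a * 2^m < INR k + 1 -> INR l < b * 2^m < INR l + 1 ->
  count_box (hammersley_sym m s) a b = cN m s k l.
Proof.
  intros Hs Ha Hb. assert (HM : 0 < 2^m) by (apply pow_lt; lra).
  unfold count_box, hammersley_sym, hammersley. rewrite filter_app, length_app, map_map, !filter_map_len.
  rewrite lsum_plus'. unfold cN. apply lsum_ext. intros t Ht. pose proof (all_bits_len _ _ Ht) as Hlen.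
  assert (E1 : hx m t = INR (Xv t) / 2^m) by (rewrite <- Hlen; apply hx_val).
  assert (E2 : hy m s t = INR (Yv s t) / 2^m) by (rewrite <- Hlen; apply hy_val; lia).
  pose proof (Yv_lt s t) as HY. rewrite Hlen in HY.
  assert (E3 : 1 - INR (Yv s t) / 2^m = INR (2^m - Yv s t)%nat / 2^m).
  { rewrite minus_INR, INR_pow2 by lia. field. lra. }
  simpl fst; simpl snd. rewrite E1, E2, E3.
  rewrite (rlt2 _ _ _ _ (Xv t <=? k)%nat (Yv s t <=? l)%nat) by (apply cmp_iff; auto).
  rewrite (rlt2 _ _ _ _ (Xv t <=? k)%nat (2^m - Yv s t <=? l)%nat) by (apply cmp_iff; auto).
  unfold hc. destruct (Xv t <=? k)%nat, (Yv s t <=? l)%nat, (2^m - Yv s t <=? l)%nat; reflexivity.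
Qed.

Lemma cell_conv k x M : 0 < M -> INR k * / M < x < (INR k + 1) * / M -> INR k < x * M < INR k + 1.
Proof.
  intros HM [H1 H2]. split.
  - apply (Rmult_lt_compat_r M) in H1; auto. replace (INR k * / M * M) with (INR k) in H1 by (field; lra). auto.
  - apply (Rmult_lt_compat_r M) in H2; auto. replace ((INR k + 1) * / M * M) with (INR k + 1) in H2 by (field; lra). auto.
Qed.

Definition Wc (M c : R) (k l : nat) : R :=
  let h := / M in let N := 2 * M in
  let lo := INR k * h in let hi := (INR k + 1) * h in
  let LO := INR l * h in let HI := (INR l + 1) * h in
  (c*c*(hi-lo))*(HI-LO) + (-2*c*N*(hi*hi-lo*lo)/2)*(HI*HI-LO*LO)/2 + (N*N*(hi*hi*hi-lo*lo*lo)/3)*(HI*HI*HI-LO*LO*LO)/3.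

Lemma is_RInt_val (f : R -> R) a b v w : is_RInt f a b v -> v = w -> is_RInt f a b w.
Proof. intros H <-; auto. Qed.

Lemma integral_sum m s : length s = m ->
  is_RInt (fun b => RInt (fun a => Rabs (local_disc (hammersley_sym m s) a b) ^ 2) 0 1) 0 1
    (sum2 (2^m) (fun k l => Wc (2^m) (cR m s k l) k l)).
Proof.
  intros Hs. set (Mn := (2^m)%nat). assert (HMR : INR Mn = 2^m) by apply INR_pow2.
  assert (HM : 0 < 2^m) by (apply pow_lt; lra).
  assert (Hone : INR Mn * / 2^m = 1) by (rewrite HMR; field; lra).
  assert (HN : INR (length (hammersley_sym m s)) = 2 * 2^m) by (rewrite sym_length, INR_pow2; reflexivity).
  assert (Hin : forall l b, (l < Mn)%nat -> INR l * / 2^m < b < (INR l + 1) * / 2^m ->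
     RInt (fun a => Rabs (local_disc (hammersley_sym m s) a b) ^ 2) 0 1 =
     sumR Mn (fun k => cR m s k l * cR m s k l * ((INR k + 1) * / 2^m - INR k * / 2^m)
        + (-2 * cR m s k l * (2*2^m) * b) * (((INR k + 1) * / 2^m)*((INR k + 1) * / 2^m) - (INR k * / 2^m)*(INR k * / 2^m)) / 2
        + ((2*2^m)*(2*2^m)*(b*b)) * (((INR k + 1) * / 2^m)*((INR k + 1) * / 2^m)*((INR k + 1) * / 2^m)
             - (INR k * / 2^m)*(INR k * / 2^m)*(INR k * / 2^m)) / 3)).
  { intros l b Hl Hb. apply cell_conv in Hb; auto.
    apply is_RInt_unique.
    match goal with |- is_RInt ?F 0 1 ?V => assert (HH : is_RInt F 0 (INR Mn * / 2^m) V) end.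
    { apply (is_RInt_cells _ Mn (/ 2^m) (fun k a => (cR m s k l * cR m s k l) + (-2 * cR m s k l * (2*2^m) * b) * a + ((2*2^m)*(2*2^m)*(b*b))*(a*a))).
    + apply Rinv_0_lt_compat; auto.
    + intros k a Hk Ha. apply cell_conv in Ha; auto.
      rewrite pow2_abs. unfold local_disc. rewrite HN, (count_box_cell m s k l a b Hs Ha Hb). unfold cR. ring.
    + intros k Hk. apply is_RInt_quad. }
    rewrite Hone in HH. exact HH. }
  assert (Hmain : is_RInt (fun b => RInt (fun a => Rabs (local_disc (hammersley_sym m s) a b) ^ 2) 0 1) 0 (INR Mn * / 2^m)
     (sumR Mn (fun l => sumR Mn (fun k => Wc (2^m) (cR m s k l) k l)))).
  { apply (is_RInt_cells _ Mn (/ 2^m) (fun l b => sumR Mn (fun k => cR m s k l * cR m s k l * ((INR k + 1) * / 2^m - INR k * / 2^m)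
        + (-2 * cR m s k l * (2*2^m) * b) * (((INR k + 1) * / 2^m)*((INR k + 1) * / 2^m) - (INR k * / 2^m)*(INR k * / 2^m)) / 2
        + ((2*2^m)*(2*2^m)*(b*b)) * (((INR k + 1) * / 2^m)*((INR k + 1) * / 2^m)*((INR k + 1) * / 2^m)
             - (INR k * / 2^m)*(INR k * / 2^m)*(INR k * / 2^m)) / 3))).
    - apply Rinv_0_lt_compat; auto.
    - intros l b Hl Hb. apply Hin; auto.
    - intros l Hl. apply is_RInt_sumR. intros k Hk.
      eapply is_RInt_val; [eapply is_RInt_ext; [|apply (is_RInt_quad
        (cR m s k l * cR m s k l * ((INR k + 1) * / 2^m - INR k * / 2^m))
        (-2 * cR m s k l * (2*2^m) * (((INR k + 1) * / 2^m)*((INR k + 1) * / 2^m) - (INR k * / 2^m)*(INR k * / 2^m)) / 2)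
        ((2*2^m)*(2*2^m) * (((INR k + 1) * / 2^m)*((INR k + 1) * / 2^m)*((INR k + 1) * / 2^m)
             - (INR k * / 2^m)*(INR k * / 2^m)*(INR k * / 2^m)) / 3))]|].
      + intros x _. simpl. match goal with |- ?a = ?b => change (@eq R a b) end. field. lra.
      + unfold Wc. match goal with |- ?a = ?b => change (@eq R a b) end. field. lra. }
  rewrite Hone in Hmain. exact Hmain.
Qed.

Lemma sum_cube n : sumR n (fun k => 3*(INR k*INR k) + 3*INR k + 1) = INR n ^ 3.
Proof. induction n; [simpl; ring|]. rewrite sumR_S, IHn, S_INR. ring. Qed.

Lemma Wsum n (c : nat -> nat -> R) : (0 < n)%nat ->
  sum2 n (fun k l => Wc (INR n) (c k l) k l) =
  qQ n c / INR n ^ 2 - (4 * qW n c w11 + 2 * qW n c w10 + 2 * qW n c w01 + qW n c w00) / INR n ^ 3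
  + 4 * INR n ^ 2 / 9.
Proof.
  intros Hn. assert (HM : 0 < INR n) by (apply lt_0_INR; auto).
  transitivity (sum2 n (fun k l => (/ INR n ^ 2) * (c k l * c k l) + (-4 / INR n ^ 3) * (c k l * w11 k l)
     + (-2 / INR n ^ 3) * (c k l * w10 k l) + (-2 / INR n ^ 3) * (c k l * w01 k l) + (-1 / INR n ^ 3) * (c k l * w00 k l)
     + (4 / (9 * INR n ^ 4)) * ((3*(INR k*INR k) + 3*INR k + 1) * (3*(INR l*INR l) + 3*INR l + 1)))).
  - apply sum2_ext; intros k l _ _. unfold Wc, w00, w10, w01, w11. field. lra.
  - rewrite !sum2_plus, !sum2_scal. rewrite (sum2_prod n (fun k => 3*(INR k*INR k) + 3*INR k + 1) (fun l => 3*(INR l*INR l) + 3*INR l + 1)).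
    rewrite sum_cube. unfold qQ, qW. field. lra.
Qed.

Lemma ones_le s : (ones s <= length s)%nat.
Proof. induction s; simpl; auto. destruct a; simpl; lia. Qed.

Lemma lin_le_pow m : (m <= 2 ^ m)%nat.
Proof. induction m; simpl; [lia|]. pose proof (Nat.pow_nonzero 2 m ltac:(lia)). lia. Qed.

Lemma Rdiv_le_1 x y : 0 < y -> x <= y -> x / y <= 1.
Proof.
  intros Hy Hxy. unfold Rdiv. apply Rle_trans with (y * / y).
  - apply Rmult_le_compat_r; [left; apply Rinv_0_lt_compat; auto | auto].
  - rewrite Rinv_r; lra.
Qed.

Lemma Ival m s : length s = m ->
  RInt (fun b => RInt (fun a => Rabs (local_disc (hammersley_sym m s) a b) ^ 2) 0 1) 0 1 =
  qQ (2^m) (cR m s) / (2^m) ^ 2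
  - (4 * qW (2^m) (cR m s) w11 + 2 * qW (2^m) (cR m s) w10 + 2 * qW (2^m) (cR m s) w01 + qW (2^m) (cR m s) w00) / (2^m) ^ 3
  + 4 * (2^m) ^ 2 / 9.
Proof.
  intros Hs. apply is_RInt_unique. pose proof (integral_sum m s Hs) as H.
  rewrite <- INR_pow2 in H. rewrite Wsum in H. rewrite INR_pow2 in H. exact H.
  pose proof (Nat.pow_nonzero 2 m). lia.
Qed.

Lemma I_bound m s : length s = m ->
  let I := RInt (fun b => RInt (fun a => Rabs (local_disc (hammersley_sym m s) a b) ^ 2) 0 1) 0 1 in
  0 <= I /\ Rabs (I - (INR m + 1) / 24) <= 2.
Proof.
  intros Hs I. unfold I. rewrite Ival by auto. subst m.
  pose proof (CF_all s) as (a1&a2&a3&a4&_).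
  rewrite INR_pow2 in a1, a2, a3, a4. rewrite a1, a2, a3, a4.
  destruct s as [|s1 s'].
  - simpl. assert (Hq : qQ 1 (cR 0 []) = 1).
    { destruct base_vals as (e1&e2&e3). unfold qQ, sum2, cR. cbn [sumR]. rewrite e1. simpl. ring. }
    simpl in Hq. rewrite Hq. simpl. split; [lra|]. apply Rabs_le. lra.
  - pose proof (CFQ_all (s1 :: s') ltac:(simpl; lia)) as (q1&_&_). rewrite INR_pow2 in q1. rewrite q1.
    set (m := length (s1 :: s')) in *. set (o := ones (s1 :: s')).
    assert (Hm1 : (1 <= m)%nat) by (unfold m; simpl; lia).
    assert (Ho : (o <= m)%nat) by apply ones_le.
    assert (Hmp : (m <= 2^m)%nat) by apply lin_le_pow.
    assert (HM2 : (2 <= 2^m)%nat) by (change (2^1 <= 2^m)%nat; apply Nat.pow_le_mono_r; lia).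
    apply le_INR in Ho, Hmp, HM2. rewrite INR_pow2 in Hmp, HM2. change (INR 2) with (1+1) in HM2.
    pose proof (pos_INR o) as Ho0.
    set (M := 2 ^ m) in *.
    assert (E : forall x, x = (INR m + 1)/24 + 7/12 - INR m / (4*M) - 1 / (18*M*M) + INR o / (2*M) -> 0 <= x /\ Rabs (x - (INR m + 1) / 24) <= 2).
    { intros x ->.
      assert (0 <= INR m / M <= 1) by (split; [apply Rdiv_le_0_compat; lra|apply Rdiv_le_1; lra]).
      assert (0 <= INR o / M <= 1) by (split; [apply Rdiv_le_0_compat; lra|apply Rdiv_le_1; lra]).
      assert (0 <= 1 / (M*M) <= 1) by (split; [apply Rdiv_le_0_compat; nra|apply Rdiv_le_1; nra]).
      replace (INR m / (4*M)) with (INR m / M / 4) by (field; lra).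
      replace (1 / (18*M*M)) with (1 / (M*M) / 18) by (field; lra).
      replace (INR o / (2*M)) with (INR o / M / 2) by (field; lra).
      split; [|apply Rabs_le]; lra. }
    apply E. field. lra.
Qed.

Lemma sqrt_diff_bound x a : 0 <= x -> 1/25 <= a -> Rabs (x - a) <= 2 -> Rabs (sqrt x - sqrt a) <= 10.
Proof.
  intros Hx Ha Hd.
  assert (Hsa : 1/5 <= sqrt a).
  { replace (1/5) with (sqrt (1/25)). apply sqrt_le_1_alt; auto.
    replace (1/25) with ((1/5)*(1/5)) by field. apply sqrt_square. lra. }
  pose proof (sqrt_pos x) as Hsx.
  assert (E : (sqrt x - sqrt a) * (sqrt x + sqrt a) = x - a).
  { ring_simplify. rewrite <- !Rsqr_pow2, !Rsqr_sqrt; lra. }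
  assert (Hp : 0 < sqrt x + sqrt a) by lra.
  replace (sqrt x - sqrt a) with ((x - a) / (sqrt x + sqrt a)) by (rewrite <- E; field; lra).
  unfold Rdiv. rewrite Rabs_mult, Rabs_inv, (Rabs_right (sqrt x + sqrt a)) by lra.
  apply Rle_trans with (2 * / (1/5)).
  - apply Rmult_le_compat; auto using Rabs_pos. left; apply Rinv_0_lt_compat; lra.
    apply Rinv_le_contravar; lra.
  - lra.
Qed.

Theorem corollary1 :
  exists C : R, C > 0 /\
    forall (m : nat) (sigma : list bool), length sigma = m ->
      let N := 2 ^ (m + 1) in
      Rabs (L2_disc (hammersley_sym m sigma) - / N * sqrt (ln N / (24 * ln 2)))
        <= C / N.
Proof.
  exists 10. split; [lra|]. intros m s Hs N.
  assert (HN : 0 < N) by (apply pow_lt; lra).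
  assert (Hln2 : 0 < ln 2) by (rewrite <- ln_1; apply ln_increasing; lra).
  assert (Hlog : ln N / (24 * ln 2) = (INR m + 1) / 24).
  { unfold N. rewrite ln_pow by lra. rewrite plus_INR. simpl INR. field. lra. }
  assert (Hlen : INR (length (hammersley_sym m s)) = N).
  { rewrite sym_length, INR_pow2. unfold N. rewrite Nat.add_1_r. reflexivity. }
  unfold L2_disc. rewrite Hlen, Hlog.
  destruct (I_bound m s Hs) as [HI0 HI].
  set (I := RInt (fun b => RInt (fun a => Rabs (local_disc (hammersley_sym m s) a b) ^ 2) 0 1) 0 1) in *.
  rewrite <- Rmult_minus_distr_l, Rabs_mult, Rabs_right by (left; apply Rinv_0_lt_compat; auto).
  unfold Rdiv. rewrite Rmult_comm. apply Rmult_le_compat_r; [left; apply Rinv_0_lt_compat; auto|].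
  apply sqrt_diff_bound; auto.
  pose proof (pos_INR m). lra.
Qed.
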